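(* For all integers $\ell\ge 3$ and $n\ge 1$, $$\ell n-2\ell-1\le f_\ell(n,1)\le \ell n-\ell+1.$$
   Context: $f_\ell(n,1)$ denotes the clique number of the xor-product of $\ell$ copies of the complete graph $K_n$. The xor-product $G\cdot H$ of graphs $G,H$ has vertex set $V(G)\times V(H)$, and $(g,h)$, $(g',h')$ are adjacent iff exactly one of the following holds: $gg'\in E(G)$, $hh'\in E(H)$; the xor-product of several graphs is formed iteratively (the operation is associative: two tuples are adjacent iff they are adjacent in an odd number of coordinates). *)

(* Defs.v *)
From mathcomp Require Import all_boot all_order all_algebra.
Set Implicit Arguments. Unset Strict Implicit. Unset Printing Implicit Defensive.

(* Vertices of the xor-product of l copies of K_n: l-tuples over 'I_n,
   represented as finite functions 'I_l -> 'I_n. *)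
Definition xvert (l n : nat) := {ffun 'I_l -> 'I_n}.

Definition xadj (l n : nat) (x y : xvert l n) : bool :=
  odd #|[set i : 'I_l | x i != y i]|.

Definition is_xclique (l n : nat) (S : {set xvert l n}) : bool :=
  [forall x in S, forall y in S, (x != y) ==> xadj x y].

(* f_l(n,1): the clique number of the xor-product of l copies of K_n. *)
Definition f_xor (l n : nat) : nat :=
  \max_(S : {set xvert l n} | is_xclique S) #|S|.

(* Main.v *)
Require Import Defs.
From mathcomp Require Import all_boot all_order all_algebra.
From mathcomp Require Import zify.
Import GRing.Theory Num.Theory.
Local Open Scope ring_scope.

Lemma sum_option (T : finType) (F : option T -> 'F_2) :
  \sum_(c : option T) F c = F None + \sum_(t : T) F (Some t).
Proof.
transitivity (\sum_(c <- None :: map Some (enum T)) F c).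
  rewrite -big_enum /=.
  apply: perm_big; apply: uniq_perm.
  - exact: enum_uniq.
  - rewrite /= map_inj_uniq ?enum_uniq //; last by move=> a b [].
    rewrite andbT.
    by apply/mapP => -[t].
  - case=> [t|]; rewrite mem_enum /= ?inE //.
    by apply/esym/mapP; exists t; rewrite ?mem_enum.
by rewrite big_cons big_map big_enum.
Qed.

Lemma F2_double (z : 'F_2) : z + z = 0.
Proof. by rewrite -mulr2n -mulr_natr -(Fp_nat_mod (p:=2)) // mulr0. Qed.

Lemma F2_nat (m : nat) : (m%:R : 'F_2) = (odd m)%:R.
Proof. by rewrite -(Fp_nat_mod (p:=2)) // modn2. Qed.

Definition Ccol (l n : nat) := option ('I_l * 'I_n.-1)%type.
Definition wid (n : nat) (b : 'I_n.-1) : 'I_n := widen_ord (leq_pred n) b.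

Set Implicit Arguments. Unset Strict Implicit.
Definition mE (l n : nat) (x : xvert l n) (c : Ccol l n) : 'F_2 :=
  match c with None => 1 | Some p => (x p.1 == wid n p.2)%:R end.
Definition nE (l n : nat) (c : Ccol l n) (y : xvert l n) : 'F_2 :=
  match c with
  | None => \sum_(i < l) (y i == n.-1 :> nat)%:R + (l.+1)%:R
  | Some p => (y p.1 == wid n p.2)%:R + (y p.1 == n.-1 :> nat)%:R end.

Lemma per_coord (n : nat) (a c : 'I_n) :
  \sum_(b : 'I_n.-1) (a == wid n b)%:R * ((c == wid n b)%:R + (c == n.-1 :> nat)%:R)
   + (c == n.-1 :> nat)%:R = (a == c)%:R :> 'F_2.
Proof.
case: (ltnP a n.-1) => ha.
- pose o : 'I_n.-1 := Ordinal ha.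
  have Ho : wid n o = a by apply/val_inj.
  rewrite (bigD1 o) //= big1; last first.
    move=> b hb; case: eqP => [E|]; last by rewrite mul0r.
    by move: hb; rewrite -val_eqE /= E /wid /= eqxx.
  rewrite Ho eqxx [c == a]eq_sym.
  by rewrite mul1r addr0 -addrA F2_double addr0.
- have Ea : (a : nat) = n.-1.
    by have := ltn_ord a; lia.
  rewrite big1 ?add0r; last first.
    move=> b _; case: eqP => [E|]; last by rewrite mul0r.
    have := ltn_ord b; rewrite -[nat_of_ord b]/(nat_of_ord (wid n b)) -E Ea.
    by rewrite ltnn.
  by rewrite -val_eqE /= Ea eq_sym.
Qed.

Definition dist (l n : nat) (x y : xvert l n) := #|[set i | x i != y i]|.

Lemma sum_bool_card (T : finType) (P : pred T) :
  (\sum_(i : T) (P i : nat) = #|[set i | P i]|)%N.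
Proof. rewrite -sum1dep_card [in RHS]big_mkcond /=; apply: eq_bigr => i _; by case: (P i). Qed.

Lemma key (l n : nat) (x y : xvert l n) :
  \sum_(c : Ccol l n) mE x c * nE c y = ((dist x y).+1)%:R.
Proof.
rewrite sum_option /= mul1r.
rewrite -(pair_bigA _ (fun i b => mE x (Some (i,b)) * nE (Some (i,b)) y)) /=.
rewrite addrC addrA -big_split /=.
rewrite (eq_bigr (fun i => (x i == y i)%:R)); last first.
  by move=> i _; exact: per_coord.
rewrite -(natr_sum _ _ _ (fun i => nat_of_bool (x i == y i))) sum_bool_card.
have E : ~: [set i | x i == y i] = [set i | x i != y i] by apply/setP => i; rewrite !inE.
have Hc := cardsC [set i | x i == y i]; rewrite E card_ord in Hc.
rewrite /dist -[l in (l.+1)%:R]Hc.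
rewrite -natrD F2_nat [RHS]F2_nat; congr (_%:R).
by rewrite addnS /= !oddD addbA addbb.
Qed.

Lemma clique_odd (l n : nat) (S : {set xvert l n}) x y :
  is_xclique S -> x \in S -> y \in S -> x != y -> odd (dist x y).
Proof.
move=> /forallP /(_ x) /implyP /(_ _) H xS yS nxy.
by move: (H xS) => /forallP /(_ y) /implyP /(_ yS) /implyP /(_ nxy).
Qed.

Lemma upper_card (l n : nat) (S : {set xvert l n}) :
  is_xclique S -> (#|S| <= #|{: Ccol l n}|)%N.
Proof.
move=> hS.
pose M : 'M['F_2]_(#|S|, #|{: Ccol l n}|) :=
  \matrix_(r, c) mE (enum_val r) (enum_val c).
pose N : 'M['F_2]_(#|{: Ccol l n}|, #|S|) :=
  \matrix_(c, r) nE (enum_val c) (enum_val r).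
have MN : M *m N = 1%:M.
  apply/matrixP => r r'; rewrite !mxE.
  rewrite (eq_bigr (fun c => mE (enum_val r) (enum_val c) * nE (enum_val c) (enum_val r'))); last first.
    by move=> c _; rewrite !mxE.
  rewrite -(big_enum_val (fun c => mE (enum_val r) c * nE c (enum_val r'))) /=.
  rewrite key.
  case: (eqVneq r r') => [<-|nrr].
    rewrite /dist; set A := [set _ | _].
    have -> : A = set0 by apply/setP => i; rewrite !inE eqxx.
    by rewrite cards0.
  have nxy : enum_val r != enum_val r'.
    by apply: contra nrr => /eqP /enum_val_inj ->.
  have := clique_odd hS (enum_valP r) (enum_valP r') nxy.
  by rewrite F2_nat /= => ->.
have := mxrankM_maxl M N; rewrite MN mxrank1 => h.
exact: leq_trans h (rank_leq_col M).
Qed.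

Local Open Scope nat_scope.
Definition W (i a k : nat) : nat := if k == i then a else (odd i (+) (i < k)).

Lemma nb_eq (x y : bool) : ((x : nat) == y) = (x == y).
Proof. by case: x; case: y. Qed.

Lemma count_const (T : Type) (c : bool) (s : seq T) :
  count (fun=> c) s = c * size s.
Proof. by case: c; rewrite ?count_predT ?count_pred0 ?mul1n. Qed.

Lemma W_count_lt (L i j a b : nat) : i < j < L -> odd L -> 2 <= a -> 2 <= b ->
  odd (count (fun k => W i a k != W j b k) (iota 0 L)).
Proof.
move=> /andP[ij jL] oL ha hb.
have [s Ej] : exists s, j = i + s.+1 by exists (j - i).-1; lia.
have [t EL] : exists t, L = j.+1 + t by exists (L - j.+1); lia.
subst L j.
have -> : (i + s.+1).+1 + t = i + (1 + (s + (1 + t))) by lia.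
rewrite !iotaD !count_cat add0n /=.
rewrite (@eq_in_count _ _ (fun=> odd i != odd (i + s.+1))); last first.
  move=> k; rewrite mem_iota => hk; rewrite /W.
  have -> : (k == i) = false by lia.
  have -> : (k == i + s.+1) = false by lia.
  have -> : (i < k) = false by lia.
  have -> : (i + s.+1 < k) = false by lia.
  by rewrite !addbF nb_eq.
rewrite [X in _ + (_ + (X + _))](@eq_in_count _ _ (fun=> odd i == odd (i + s.+1))); last first.
  move=> k; rewrite mem_iota => hk; rewrite /W.
  have -> : (k == i) = false by lia.
  have -> : (k == i + s.+1) = false by lia.
  have -> : (i < k) = true by lia.
  have -> : (i + s.+1 < k) = false by lia.
  by rewrite addbT addbF nb_eq; case: (odd i); case: (odd _).
rewrite [X in _ + (_ + (_ + (_ + X)))](@eq_in_count _ _ (fun=> odd i != odd (i + s.+1))); last first.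
  move=> k; rewrite mem_iota => hk; rewrite /W.
  have -> : (k == i) = false by lia.
  have -> : (k == i + s.+1) = false by lia.
  have -> : (i < k) = true by lia.
  have -> : (i + s.+1 < k) = true by lia.
  by rewrite !addbT nb_eq; case: (odd i); case: (odd _).
rewrite !count_const !size_iota /W eqxx.
have -> : (i == i + s.+1) = false by lia.
have -> : (i + 1 + s == i) = false by lia.
have -> : (i + 1 + s == i + s.+1) = true by lia.
have H1 : forall c : bool, (a != c) = true by case; lia.
have H2 : forall c : bool, ((c : nat) != b) = true by case; lia.
rewrite H1 H2 /=.
move: oL; rewrite !addn0 !(oddD, oddM, oddS, oddb) /=.
by case: (odd i); case: (odd s); case: (odd t).
Qed.

Lemma W_count (L i j a b : nat) : i < L -> j < L -> odd L -> 2 <= a -> 2 <= b ->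
  (i, a) != (j, b) -> odd (count (fun k => W i a k != W j b k) (iota 0 L)).
Proof.
move=> iL jL oL ha hb nij.
case: (ltngtP i j) => hij.
- by apply: W_count_lt => //; rewrite hij.
- rewrite (eq_count (a2 := fun k => W j b k != W i a k)); last by move=> k; rewrite eq_sym.
  by apply: W_count_lt => //; rewrite hij.
- subst j.
  have nab : a != b by apply: contra nij => /eqP ->.
  suff -> : count (fun k => W i a k != W i b k) (iota 0 L) = 1 by [].
  transitivity (count_mem i (iota 0 L)).
    apply: eq_in_count => k _ /=.
    rewrite /W /=; case: (k == i) => /=; [exact: nab | apply/negbTE; rewrite negbK; exact: eqxx].
  have E := count_uniq_mem i (iota_uniq 0 L); rewrite mem_iota add0n iL in E.
  by rewrite E leq0n.
Qed.

Definition U0 (k : nat) : nat := (k == 1).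

Lemma U0_count (i a : nat) : i < 3 -> 2 <= a ->
  ~~ odd (count (fun k => W i a k != U0 k) (iota 0 3)).
Proof.
move=> hi ha.
have H0 : (a != 0) = true by lia.
have H1 : (a != 1) = true by lia.
case: i hi => [|[|[|]]] // _; rewrite /= /W /U0 /= ?H0 ?H1 //.
Qed.

Lemma dist_sym (l n : nat) (x y : xvert l n) : dist x y = dist y x.
Proof. by rewrite /dist; apply: eq_card => i; rewrite !inE eq_sym. Qed.

Lemma dist_xx (l n : nat) (x : xvert l n) : dist x x = 0%N.
Proof. by rewrite /dist; apply: eq_card0 => i; rewrite !inE eqxx. Qed.

Lemma clique_img (l n : nat) (T : finType) (D : {pred T}) (f : T -> xvert l n) :
  {in D &, forall p q, p != q -> odd (dist (f p) (f q))} ->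
  (#|D| <= f_xor l n)%N.
Proof.
move=> H.
have inj : {in D &, injective f}.
  move=> p q pD qD E; apply/eqP; apply/negPn/negP => npq.
  by have := H p q pD qD npq; rewrite E dist_xx.
rewrite -(card_in_imset inj).
apply: (leq_bigmax_cond (F := fun S : {set xvert l n} => #|S|)).
apply/forallP => x; apply/implyP => /imsetP [p pD ->].
apply/forallP => y; apply/implyP => /imsetP [q qD ->].
apply/implyP => nxy.
have npq : p != q by apply: contra nxy => /eqP ->.
exact: H.
Qed.

Definition mkw (L n' : nat) (g : nat -> nat) : xvert L n'.+1 :=
  [ffun k : 'I_L => inord (g k)].

Lemma dist_mkw (L n' : nat) (g1 g2 : nat -> nat) :
  (forall k, g1 k < n'.+1) -> (forall k, g2 k < n'.+1) ->
  dist (mkw L n' g1) (mkw L n' g2) = count (fun k => g1 k != g2 k) (iota 0 L).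
Proof.
move=> h1 h2.
rewrite /dist -sum1dep_card.
transitivity (\sum_(k < L | g1 k != g2 k) 1).
  by apply: eq_bigl => k; rewrite !ffunE -val_eqE /= !inordK.
by rewrite -(big_mkord (fun k => g1 k != g2 k) (fun=> 1)) sum1_count /index_iota subn0.
Qed.

Lemma W_lt (i c kk k : nat) : c < kk -> W i c.+2 k < kk.+2.
Proof. by rewrite /W; case: (k == i) => //; case: (_ (+) _) => //; lia. Qed.

Lemma odd_lower (l kk : nat) : odd l -> (l * kk <= f_xor l kk.+2)%N.
Proof.
move=> ol.
pose f := fun p : 'I_l * 'I_kk => mkw l kk.+1 (W p.1 (p.2).+2).
have := @clique_img l kk.+2 _ predT f.
rewrite card_prod !card_ord; apply => p q _ _ npq.
rewrite /f dist_mkw; try by move=> k; apply: W_lt.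
apply: W_count => //.
Qed.

Definition G1 (i a k : nat) : nat := if k < 3 then W i a k else W 0 2 (k - 3).
Definition G2 (j b k : nat) : nat := if k < 3 then U0 k else W j b (k - 3).

Lemma count_split (P : pred nat) (m : nat) :
  count P (iota 0 (3 + m)) = count P (iota 0 3) + count (fun k => P (3 + k)) (iota 0 m).
Proof. by rewrite iotaD -[0 + 3]/(3 + 0) iotaDl count_cat count_map. Qed.

Lemma count_split_eq (P Q1 : pred nat) (Q2 : pred nat) (m : nat) :
  {in iota 0 3, P =1 Q1} -> (forall k, P (3 + k) = Q2 k) ->
  count P (iota 0 (3 + m)) = count Q1 (iota 0 3) + count Q2 (iota 0 m).
Proof.
move=> h1 h2; rewrite count_split; congr (_ + _); first exact: eq_in_count.
exact: eq_count.
Qed.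

Lemma count_self (g : nat -> nat) (s : seq nat) : count (fun k => g k != g k) s = 0.
Proof. by rewrite (eq_count (a2 := pred0)) ?count_pred0 // => k; rewrite eqxx. Qed.

Lemma lt3 k : k \in iota 0 3 -> k < 3.
Proof. by rewrite mem_iota. Qed.

Lemma G_lt (kk : nat) (i c k : nat) : c < kk -> G1 i c.+2 k < kk.+2 /\ G2 i c.+2 k < kk.+2.
Proof.
move=> hc; rewrite /G1 /G2; split; case: (k < 3); try exact: W_lt.
- rewrite /W; case: (_ == _); first lia.
  by case: (_ (+) _).
- by rewrite /U0; case: (_ == _) => //; lia.
Qed.

Lemma G1_lo i a k : k < 3 -> G1 i a k = W i a k.
Proof. by rewrite /G1 => ->. Qed.
Lemma G1_hi i a k : G1 i a (3 + k) = W 0 2 k.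
Proof. by rewrite /G1 ltnNge leq_addr /= addKn. Qed.
Lemma G2_lo j b k : k < 3 -> G2 j b k = U0 k.
Proof. by rewrite /G2 => ->. Qed.
Lemma G2_hi j b k : G2 j b (3 + k) = W j b k.
Proof. by rewrite /G2 ltnNge leq_addr /= addKn. Qed.

Lemma d11 (m kk i a i' a' : nat) : a < kk -> a' < kk -> i < 3 -> i' < 3 ->
  (i, a.+2) != (i', a'.+2) ->
  odd (dist (mkw (3 + m) kk.+1 (G1 i a.+2)) (mkw (3 + m) kk.+1 (G1 i' a'.+2))).
Proof.
move=> ha ha' hi hi' ne.
rewrite dist_mkw; try by move=> k; case: (G_lt i k ha); case: (G_lt i' k ha').
rewrite (@count_split_eq _ (fun k => W i a.+2 k != W i' a'.+2 k) pred0).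
- by rewrite count_pred0 addn0; apply: W_count.
- by move=> k /lt3 hk /=; rewrite !G1_lo.
- by move=> k /=; rewrite !G1_hi eqxx.
Qed.

Lemma d22 (m kk j b j' b' : nat) : odd m -> b < kk -> b' < kk -> j < m -> j' < m ->
  (j, b.+2) != (j', b'.+2) ->
  odd (dist (mkw (3 + m) kk.+1 (G2 j b.+2)) (mkw (3 + m) kk.+1 (G2 j' b'.+2))).
Proof.
move=> om hb hb' hj hj' ne.
rewrite dist_mkw; try by move=> k; case: (G_lt j k hb); case: (G_lt j' k hb').
rewrite (@count_split_eq _ pred0 (fun k => W j b.+2 k != W j' b'.+2 k)).
- by rewrite count_pred0 add0n; apply: W_count.
- by move=> k /lt3 hk /=; rewrite !G2_lo // eqxx.
- by move=> k /=; rewrite !G2_hi.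
Qed.

Lemma d12 (m kk i a j b : nat) : odd m -> a < kk -> b < kk -> i < 3 -> j < m ->
  (0, 2) != (j, b.+2) ->
  odd (dist (mkw (3 + m) kk.+1 (G1 i a.+2)) (mkw (3 + m) kk.+1 (G2 j b.+2))).
Proof.
move=> om ha hb hi hj ne.
rewrite dist_mkw; try by move=> k; case: (G_lt i k ha); case: (G_lt j k hb).
rewrite (@count_split_eq _ (fun k => W i a.+2 k != U0 k) (fun k => W 0 2 k != W j b.+2 k)).
- rewrite oddD (negbTE (U0_count hi _)) //=.
  by apply: W_count => //; case: (m) hj.
- by move=> k /lt3 hk /=; rewrite G1_lo // G2_lo.
- by move=> k /=; rewrite G1_hi G2_hi.
Qed.

Lemma even_lower (m kk : nat) : odd m -> ((3 + m) * kk <= (f_xor (3 + m) kk.+2).+1)%N.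
Proof.
move=> om.
case: kk => [|kk]; first by rewrite muln0.
have m0 : 0 < m by case: m om.
pose z : 'I_3 * 'I_kk.+1 + 'I_m * 'I_kk.+1 := inr (Ordinal m0, ord0).
pose f := fun p : 'I_3 * 'I_kk.+1 + 'I_m * 'I_kk.+1 =>
  match p with
  | inl p => mkw (3 + m) kk.+2 (G1 p.1 (p.2).+2)
  | inr q => mkw (3 + m) kk.+2 (G2 q.1 (q.2).+2) end.
have := @clique_img (3 + m) kk.+3 _ (predC1 z) f.
rewrite cardC1 card_sum !card_prod !card_ord.
have -> : (3 + m) * kk.+1 = (3 * kk.+1 + m * kk.+1).-1.+1 by rewrite mulnDl; lia.
move=> h; rewrite ltnS; apply: h.
move=> [[i a]|[j b]] [[i' a']|[j' b']]; rewrite !inE /f => pD qD npq.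
- by apply: d11 => //.
- apply: d12 => //.
  apply: contra qD => /eqP [e1 e2]; apply/eqP; congr inr; congr pair; apply: val_inj => /=; lia.
- rewrite dist_sym; apply: d12 => //.
  apply: contra pD => /eqP [e1 e2]; apply/eqP; congr inr; congr pair; apply: val_inj => /=; lia.
- apply: d22 => //.
Qed.

Lemma upper_nat (l n : nat) : (f_xor l n <= (l * n.-1).+1)%N.
Proof.
apply/bigmax_leqP => S hS; have := upper_card hS.
by rewrite card_option card_prod !card_ord.
Qed.

Lemma lower_nat (l kk : nat) : 3 <= l -> (l * kk <= (f_xor l kk.+2).+1)%N.
Proof.
move=> hl; case: (boolP (odd l)) => ol.
  by apply: leq_trans (odd_lower kk ol) _.
have -> : l = 3 + (l - 3) by lia.
apply: even_lower.
by move: ol; rewrite -{1}(subnKC hl) oddD /=; case: (odd _).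
Qed.

Local Open Scope ring_scope.
Unset Implicit Arguments.

Theorem theorem1p2 (l n : nat) (hl : (3 <= l)%N) (hn : (1 <= n)%N) :
  (l%:Z * n%:Z - 2 * l%:Z - 1 <= (f_xor l n)%:Z) /\
  ((f_xor l n)%:Z <= l%:Z * n%:Z - l%:Z + 1).
Proof.
split.
- case: n hn => [|[|kk]] _.
  + by rewrite mulr0 add0r; lia.
  + have := lower_nat 0 hl; lia.
  + have := lower_nat kk hl; nia.
- have := upper_nat l n; nia.
Qed.
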